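(* The family $\Sigma_n$ is $\left(\frac n4,\frac n4\right)$-spread.
   Context: $\Sigma_n$ is the set of permutations of $[n]$, each identified with its graph $\{(i,\sigma(i)):i\in[n]\}$, so $\Sigma_n\subset{[n]^2\choose n}$. For a family $\mathcal{F}$ of subsets of $[n]^2$ and $X\subset[n]^2$, $\mathcal{F}(X):=\{F\setminus X: X\subset F\in\mathcal{F}\}$. $\mathcal{F}$ is $r$-spread if $|\mathcal{F}(X)|\le r^{-|X|}|\mathcal{F}|$ for all $X\subset[n]^2$, and $(r,q)$-spread if $\mathcal{F}(A)$ is $r$-spread for every $A\subset[n]^2$ with $|A|\le q$. *)

(* Defs.v *)
From mathcomp Require Import all_boot all_order all_algebra all_fingroup.
Set Implicit Arguments. Unset Strict Implicit. Unset Printing Implicit Defensive.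
Import Order.TTheory GRing.Theory Num.Theory.
Local Open Scope ring_scope.

Definition grid (n : nat) : finType := ('I_n * 'I_n)%type.

Definition perm_graph (n : nat) (s : 'S_n) : {set grid n} :=
  [set (i, s i) | i : 'I_n].

Definition Sigma (n : nat) : {set {set grid n}} :=
  [set perm_graph s | s : 'S_n].

Definition link (T : finType) (F : {set {set T}}) (X : {set T}) : {set {set T}} :=
  [set S :\: X | S in F & X \subset S].

Definition spread (T : finType) (r : rat) (F : {set {set T}}) : Prop :=
  forall X : {set T}, (#|link F X|%:R : rat) <= r ^- #|X| * (#|F|%:R).

Definition spread2 (T : finType) (r q : rat) (F : {set {set T}}) : Prop :=
  forall A : {set T}, (#|A|%:R : rat) <= q -> spread r (link F A).

(* Main.v *)
Require Import Defs.
From mathcomp Require Import all_boot all_order all_algebra all_fingroup.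
From mathcomp Require Import zify.
Import GRing.Theory Num.Theory.


Lemma expmono (a b e : nat) : a <= b -> a ^ e <= b ^ e.
Proof. by case: e => [//|e] H; rewrite leq_exp2r. Qed.

Lemma pow2_fact i : 2 ^ i <= i.+1`!.
Proof.
elim: i => [//|i IH]; rewrite expnS factS.
apply: leq_mul => //.
Qed.

Lemma ffact_le_exp m i : m ^_ i <= m ^ i.
Proof.
elim: i => [|i IH]; first by rewrite ffactn0.
rewrite ffactnSr expnSr; apply: leq_mul => //; exact: leq_subr.
Qed.

Lemma cterm m j : 'C(m, j.+1) * m ^ (m - j.+1) * 2 ^ j <= m ^ m.
Proof.
case: (leqP j.+1 m) => H; last by rewrite bin_small.
have h1 : 'C(m, j.+1) * 2 ^ j <= m ^ j.+1.
  apply: leq_trans (ffact_le_exp m j.+1).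
  rewrite -bin_ffact; apply: leq_mul => //; exact: pow2_fact.
rewrite mulnAC; apply: leq_trans (leq_mul h1 (leqnn _)) _.
by rewrite -expnD subnKC.
Qed.

Lemma Tbound m k :
  (\sum_(i < k) 'C(m, i.+1) * m ^ (m - i.+1)) * 2 ^ k <= (2 ^ k - 1) * 2 * m ^ m.
Proof.
elim: k => [|k IH]; first by rewrite big_ord0.
rewrite big_ord_recr /= mulnDl.
have c := cterm m k.
have p : 0 < 2 ^ k by rewrite expn_gt0.
set T := \sum_(i < k) _ in IH *.
set c0 := 'C(m, k.+1) * m ^ (m - k.+1) in c *.
rewrite expnS.
have e1 : T * (2 * 2 ^ k) = 2 * (T * 2 ^ k) by rewrite mulnCA.
have e2 : c0 * (2 * 2 ^ k) = 2 * (c0 * 2 ^ k) by rewrite mulnCA.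
rewrite e1 e2.
set M := m ^ m in c *.
set P := 2 ^ k in IH p e1 e2 *.
set U := T * P in IH e1 *.
set V := c0 * P in c e2 *.
nia.
Qed.

Lemma succ_pow m : m.+1 ^ m <= 3 * m ^ m.
Proof.
rewrite -addn1 expnDn big_ord_recl /= bin0 subn0 exp1n !muln1 mul1n.
under eq_bigr => i _ do rewrite exp1n muln1 /bump leq0n add1n.
have := Tbound m m.
set T := \sum_(i < m) _.
have p : 0 < 2 ^ m by rewrite expn_gt0.
move=> H.
have : T <= 2 * m ^ m.
  rewrite -(leq_pmul2r p); apply: (leq_trans H).
  set P := 2 ^ m in p H *. set M := m ^ m. nia.
move=> H2. lia.
Qed.

Lemma fact_pow m : m ^ m <= 3 ^ m * m`!.
Proof.
elim: m => [//|m IH].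
rewrite expnS factS expnS.
have h := succ_pow m.
have : m.+1 ^ m <= 3 * (3 ^ m * m`!) by apply: leq_trans h _; rewrite leq_mul2l IH orbT.
move=> h2.
set A := m.+1 ^ m in h h2 *. set B := 3 ^ m in h2 *. set C := m`! in h2 *.
nia.
Qed.

Lemma fact_le_pow y : y`! <= y ^ y.
Proof.
elim: y => [//|y IH]; rewrite factS expnS.
apply: leq_mul => //; apply: leq_trans IH _; apply: expmono; exact: leqnSn.
Qed.

Lemma ffact_low x m : x <= m -> (m - x).+1 ^ x <= m ^_ x.
Proof.
elim: x m => [|x IH] m H; first by rewrite ffactn0.
case: m H => [//|m] H.
rewrite ffactSS expnS subSS.
apply: leq_mul; first by rewrite ltnS leq_subr.
exact: IH.
Qed.

Lemma key x m : x <= m -> m ^ x <= 3 ^ x * m ^_ x.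
Proof.
move=> H.
case: (leqP m (3 * (m - x).+1)) => C.
  apply: leq_trans (@expmono _ _ x C) _.
  rewrite expnMn leq_mul2l ffact_low // orbT //.
set y := m - x.
have ey : m = x + y by rewrite /y subnKC.
have h1 : 3 ^ y * y`! <= m ^ y.
  apply: leq_trans (leq_mul (leqnn _) (fact_le_pow y)) _.
  rewrite -expnMn; apply: expmono; rewrite /y; lia.
have h2 : m ^ m <= 3 ^ x * m ^_ x * (3 ^ y * y`!).
  apply: leq_trans (fact_pow m) _.
  rewrite -(ffact_fact H) -/y {1}ey expnD.
  rewrite -!mulnA leq_mul2l; apply/orP; right.
  rewrite mulnCA. done.
have p : 0 < 3 ^ y * y`! by rewrite muln_gt0 expn_gt0 fact_gt0.
rewrite -(leq_pmul2r p).
apply: leq_trans h2.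
rewrite {3}ey expnD leq_mul2l h1 orbT //.
Qed.

Lemma final n a x : 4 * a <= n -> x <= n - a ->
  n ^ x * (n - a - x)`! <= 4 ^ x * (n - a)`!.
Proof.
move=> Ha Hx.
set m := n - a in Hx *.
have k := @key x m Hx.
have h : 3 ^ x * n ^ x <= 3 ^ x * (4 ^ x * m ^_ x).
  rewrite -expnMn; apply: leq_trans (_ : (4 * m) ^ x <= _).
    apply: expmono; rewrite /m; lia.
  by rewrite expnMn mulnCA leq_mul2l k orbT.
rewrite leq_mul2l expn_eq0 /= in h.
rewrite -(ffact_fact Hx) mulnA leq_mul2r h orbT //.
Qed.

Section Comb.
Variable n : nat.

Definition PP (B : {set grid n}) := [set s : 'S_n | B \subset perm_graph s].

Lemma mem_graph (s : 'S_n) i j : ((i, j) \in perm_graph s) = (j == s i).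
Proof.
apply/imsetP/eqP => [[k _ [-> ->]] //|->]; by exists i.
Qed.

Lemma perm_graph_inj : injective (@perm_graph n).
Proof.
move=> s t E; apply/permP => i.
have : (i, s i) \in perm_graph t by rewrite -E mem_graph.
by rewrite mem_graph => /eqP.
Qed.

Lemma setD_inj (S T A : {set grid n}) :
  A \subset S -> A \subset T -> S :\: A = T :\: A -> S = T.
Proof.
move=> hs ht E; apply/setP => z; case zA: (z \in A).
  by rewrite (subsetP hs _ zA) (subsetP ht _ zA).
by move/setP: E => /(_ z); rewrite !inE zA.
Qed.

Lemma cardPP B s0 : s0 \in PP B -> #|PP B| = (n - #|B|)`! /\ #|B| <= n.
Proof.
move=> Hs0.
have HB : B \subset perm_graph s0 by move: Hs0; rewrite inE.
have [D HD] : exists D : {set 'I_n}, D = [set i | (i, s0 i) \in B] by eexists.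
have BD : B = [set (i, s0 i) | i in D].
  apply/setP => [[i j]]; apply/idP/imsetP.
    move=> h; have := subsetP HB _ h; rewrite mem_graph => /eqP E.
    by exists i; rewrite ?HD ?inE -?E.
  by case=> k; rewrite HD inE => h [-> ->].
have cD : #|B| = #|D| by rewrite BD card_imset // => i j [].
have memP : forall s, (s \in PP B) = [forall i in D, s i == s0 i].
  move=> s; rewrite inE; apply/subsetP/forall_inP.
    move=> h i hi; have : (i, s0 i) \in B by move: hi; rewrite HD inE.
    by move/h; rewrite mem_graph eq_sym.
  move=> h [i j]; rewrite BD => /imsetP [k hk [-> ->]].
  by rewrite mem_graph eq_sym h.
have -> : PP B = (fun t => t * s0)%g @: perm_on (~: D).
  apply/setP => s; apply/idP/imsetP.
    move=> hs; exists (s * s0^-1)%g; last by rewrite -mulgA mulVg mulg1.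
    apply/subsetP => i; rewrite inE permM => hi; rewrite inE.
    apply: contra hi => iD; rewrite memP in hs.
    by have /eqP -> := forall_inP hs i iD; rewrite -permM mulgV perm1.
  case=> t ht ->; rewrite memP; apply/forall_inP => i iD; rewrite permM.
  by rewrite (out_perm ht) // inE iD.
rewrite card_imset; last exact: mulIg.
rewrite card_perm cD; have := cardsC D; rewrite card_ord => E.
have E' : #|~: D| = n - #|D| by lia.
by rewrite E'; split => //; lia.
Qed.

Lemma link_card A : #|link (Sigma n) A| = #|PP A|.
Proof.
have -> : link (Sigma n) A = (fun s => perm_graph s :\: A) @: PP A.
  apply/setP => T; rewrite /link /Sigma; apply/imsetP/imsetP.
    case=> S; rewrite inE => /andP [hS hA] ET.
    case/imsetP: hS => s _ ES; exists s; first by rewrite inE -ES.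
    by rewrite ET ES.
  case=> s; rewrite inE => hs ->; exists (perm_graph s) => //.
  by rewrite inE hs andbT; apply/imsetP; exists s.
apply: card_in_imset => s t hs ht E; rewrite !inE in hs ht.
by apply: perm_graph_inj; apply: setD_inj E.
Qed.

Lemma linklink_le A X : #|link (link (Sigma n) A) X| <= #|PP (A :|: X)|.
Proof.
apply: leq_trans (leq_imset_card (fun s => perm_graph s :\: A :\: X) _).
apply: subset_leq_card; apply/subsetP => T; rewrite /link /Sigma => /imsetP [U]; rewrite inE.
case/andP => hU hX ET; subst T.
case/imsetP: hU => S; rewrite inE => /andP [hS hA] EU; subst U.
case/imsetP: hS => s _ ES; subst S.
apply/imsetP; exists s => //; rewrite inE subUset hA /=.
by apply: subset_trans hX _; exact: subsetDl.
Qed.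

Lemma linklink_nonempty A X T : T \in link (link (Sigma n) A) X ->
  exists s, s \in PP (A :|: X) /\ A :&: X = set0.
Proof.
rewrite /link /Sigma; case/imsetP => U; rewrite inE => /andP [hU hX] _.
case/imsetP: hU => S; rewrite inE => /andP [hS hA] E.
case/imsetP: hS => s _ ES.
exists s; split.
  rewrite inE subUset -ES hA /=; apply: subset_trans hX _; rewrite E; exact: subsetDl.
apply/setP => z; rewrite !inE; case zA: (z \in A) => //=; apply/negP => zX.
by have := subsetP hX z zX; rewrite E inE zA.
Qed.

End Comb.

Local Open Scope ring_scope.

Theorem lemma12 (n : nat) :
  spread2 ((n%:R : rat) / 4) ((n%:R : rat) / 4) (Sigma n).
Proof.
move=> A hA X.
have h4 : (0 : rat) < 4 by [].
rewrite ler_pdivlMr // -natrM ler_nat in hA.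
have r0 : (0 : rat) <= n%:R / 4 by rewrite divr_ge0 // ler0n.
case: (set_0Vmem (link (link (Sigma n) A) X)) => [-> | [T hT]].
  rewrite cards0 mulr_ge0 // ?invr_ge0 ?exprn_ge0 //.
have [s [hs hAX]] := @linklink_nonempty n A X T hT.
have hsA : s \in PP n A by move: hs; rewrite !inE subUset => /andP [].
have [c1 _] := @cardPP n _ _ hsA.
have [c2 hle] := @cardPP n _ _ hs.
move: hle; rewrite cardsU hAX cards0 subn0 => hle.
have LL := linklink_le n A X.
rewrite c2 cardsU hAX cards0 subn0 in LL; rewrite link_card c1.
rewrite mulnC in hA.
set a := #|A| in hA c1 hle LL *. set x := #|X| in hle LL *.
have fin : (n ^ x * (n - a - x)`! <= 4 ^ x * (n - a)`!)%N by apply: final => //; lia.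
have rx : (0 : rat) < (n%:R / 4) ^+ x.
  case: x fin LL hle => [|x'] fin LL hle; first by rewrite expr0.
  apply: exprn_gt0; rewrite divr_gt0 // ltr0n; lia.
rewrite ler_pdivlMl // expr_div_n -!natrX mulrAC ler_pdivrMr ?ltr0n ?expn_gt0 //.
rewrite -!natrM ler_nat.
rewrite [X in (_ <= X)%N]mulnC; apply: leq_trans fin; rewrite leq_mul2l -subnDA LL orbT //.
Qed.
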